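(* There exist subspaces $\mathcal C$ of a bipartite space $\mathcal H=\mathcal H_A\otimes\mathcal H_B$ for which $N_B(\mathcal C)\subsetneq ST_B(\mathcal C)$.
   Context: A mixed state $\rho'$ is ''in'' $\mathcal C$ if $\mathrm{Tr}(P_{\mathcal C}\rho')=1$, where $P_{\mathcal C}$ is the projector onto $\mathcal C$. $N_B(\mathcal C)=\{\rho:\exists\rho'\text{ in }\mathcal C,\ \exists\mathcal O\text{ a super-operator acting only on }\mathcal H_B,\ \rho=\mathcal O(\rho')\}$. $ST_B(\mathcal C)=\{\rho:\exists\rho'\text{ in }\mathcal C,\ \mathrm{Tr}_B(\rho)=\mathrm{Tr}_B(\rho')\}$. *)

(* Defs.v *)
From HB Require Import structures.
From mathcomp Require Import all_boot all_order all_algebra.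
Set Implicit Arguments. Unset Strict Implicit. Unset Printing Implicit Defensive.
Import Order.TTheory GRing.Theory Num.Theory.
Local Open Scope ring_scope.

Section Quantum.
Variable C : numClosedFieldType.

Definition adjmx m n (A : 'M[C]_(m, n)) : 'M[C]_(n, m) := (map_mx Num.conj A)^T.

Definition psd n (A : 'M[C]_n) : Prop :=
  forall v : 'cV[C]_n, 0 <= (adjmx v *m A *m v) 0 0.

Definition density n (rho : 'M[C]_n) : Prop := psd rho /\ \tr rho = 1.

(* orthogonal projector (represents the subspace C = its range) *)
Definition orth_proj n (P : 'M[C]_n) : Prop := adjmx P = P /\ P *m P = P.

(* H = H_A (x) H_B, with basis index mxvec_index i j for |i>|j> *)
Definition pair_of_idx (dA dB : nat) (k : 'I_(dA * dB)) : 'I_dA * 'I_dB :=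
  enum_val (cast_ord (esym (mxvec_cast dA dB)) k).

Definition kron dA dB (X : 'M[C]_dA) (Y : 'M[C]_dB) : 'M[C]_(dA * dB) :=
  \matrix_(k, l) (X (pair_of_idx k).1 (pair_of_idx l).1 *
                  Y (pair_of_idx k).2 (pair_of_idx l).2).

Definition ptraceB dA dB (rho : 'M[C]_(dA * dB)) : 'M[C]_dA :=
  \matrix_(i, i') \sum_(j < dB) rho (mxvec_index i j) (mxvec_index i' j).

Definition in_subspace n (P rho' : 'M[C]_n) : Prop :=
  density rho' /\ \tr (P *m rho') = 1.

(* super-operator (CPTP map) on H_B, given by Kraus operators K_0..K_{r-1},
   with sum_k K_k^dag K_k = 1; applied as id_A (x) O_B *)
Definition superop_B dA dB (r : nat) (K : 'I_r -> 'M[C]_dB)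
    (rho : 'M[C]_(dA * dB)) : 'M[C]_(dA * dB) :=
  \sum_(k < r) (kron 1%:M (K k) *m rho *m adjmx (kron 1%:M (K k))).

Definition kraus_TP dB r (K : 'I_r -> 'M[C]_dB) : Prop :=
  \sum_(k < r) (adjmx (K k) *m K k) = 1%:M.

Definition N_B dA dB (P : 'M[C]_(dA * dB)) (rho : 'M[C]_(dA * dB)) : Prop :=
  density rho /\
  exists rho', in_subspace P rho' /\
  exists (r : nat) (K : 'I_r -> 'M[C]_dB), kraus_TP K /\ rho = superop_B K rho'.

Definition ST_B dA dB (P : 'M[C]_(dA * dB)) (rho : 'M[C]_(dA * dB)) : Prop :=
  density rho /\
  exists rho', in_subspace P rho' /\ ptraceB rho = ptraceB rho'.

End Quantum.

(* Main.v *)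
Require Import Defs.
From HB Require Import structures.
From mathcomp Require Import all_boot all_order all_algebra ring.
Set Implicit Arguments. Unset Strict Implicit. Unset Printing Implicit Defensive.
Import Order.TTheory GRing.Theory Num.Theory.
Local Open Scope ring_scope.

Section Aux.
Variable C : numClosedFieldType.

Lemma pair_mi m n (i : 'I_m) (j : 'I_n) : pair_of_idx (mxvec_index i j) = (i, j).
Proof. by rewrite /pair_of_idx cast_ordK enum_rankK. Qed.

Lemma sum_mi m n (F : 'I_(m * n) -> C) :
  \sum_k F k = \sum_i \sum_j F (mxvec_index i j).
Proof.
rewrite (reindex _ (curry_mxvec_bij _ _)) /= pair_bigA /=.
by apply: eq_bigr => -[i j].
Qed.

Lemma mi_eq m n (i i' : 'I_m) (j j' : 'I_n) :
  (mxvec_index i j == mxvec_index i' j') = (i == i') && (j == j').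
Proof.
apply/eqP/andP => [H|[/eqP-> /eqP->]] //.
by have := congr1 (@pair_of_idx m n) H; rewrite !pair_mi => -[-> ->].
Qed.

Lemma sum_ind n (a : 'I_n) (F : 'I_n -> C) : \sum_k (k == a)%:R * F k = F a.
Proof.
rewrite (bigD1 a) //= eqxx mul1r big1 ?addr0 // => k /negbTE ->.
by rewrite mul0r.
Qed.

Lemma adjE m n (A : 'M[C]_(m, n)) i j : adjmx A i j = (A j i)^*.
Proof. by rewrite !mxE. Qed.

Lemma kronE m n (X : 'M[C]_m) (Y : 'M[C]_n) i j i' j' :
  kron X Y (mxvec_index i j) (mxvec_index i' j') = X i i' * Y j j'.
Proof. by rewrite mxE !pair_mi. Qed.

Lemma kron1_mulE m n (Y : 'M[C]_n) (R : 'M[C]_(m * n)) i j l :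
  (kron 1%:M Y *m R) (mxvec_index i j) l = \sum_b Y j b * R (mxvec_index i b) l.
Proof.
rewrite mxE sum_mi (bigD1 i) //= [X in _ + X]big1 ?addr0 => [|a Ha].
  by apply: eq_bigr => b _; rewrite kronE mxE eqxx mul1r.
by apply: big1 => b _; rewrite kronE mxE eq_sym (negbTE Ha) !mul0r.
Qed.

Lemma mul_adjkron1E m n (Y : 'M[C]_n) (R : 'M[C]_(m * n)) k i j :
  (R *m adjmx (kron 1%:M Y)) k (mxvec_index i j) =
  \sum_b R k (mxvec_index i b) * (Y j b)^*.
Proof.
rewrite mxE sum_mi (bigD1 i) //= [X in _ + X]big1 ?addr0 => [|a Ha].
  by apply: eq_bigr => b _; rewrite adjE kronE mxE eqxx mul1r.
by apply: big1 => b _; rewrite adjE kronE mxE eq_sym (negbTE Ha) mul0r rmorph0 mulr0.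
Qed.

Lemma superopE m n r (K : 'I_r -> 'M[C]_n) (R : 'M[C]_(m * n)) i j i' j' :
  superop_B K R (mxvec_index i j) (mxvec_index i' j') =
  \sum_k \sum_b \sum_b' K k j b * R (mxvec_index i b) (mxvec_index i' b') * (K k j' b')^*.
Proof.
rewrite /superop_B summxE; apply: eq_bigr => k _.
rewrite mul_adjkron1E; under eq_bigr => b' _ do rewrite kron1_mulE mulr_suml.
by rewrite exchange_big.
Qed.


Lemma ptrace_superop m n r (K : 'I_r -> 'M[C]_n) (R : 'M[C]_(m * n)) :
  kraus_TP K -> ptraceB (superop_B K R) = ptraceB R.
Proof.
move=> HK; apply/matrixP => i i'; rewrite !mxE.
have HKe b' b : \sum_k \sum_j (K k j b')^* * K k j b = (b' == b)%:R.
  have := congr1 (fun M : 'M[C]_n => M b' b) HK; rewrite /= summxE mxE => <-.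
  by apply: eq_bigr => k _; rewrite mxE; apply: eq_bigr => j _; rewrite adjE.
under eq_bigr => j _ do rewrite superopE.
rewrite exchange_big.
under eq_bigr => k _ do rewrite exchange_big.
under eq_bigr => k _ do under eq_bigr => b _ do rewrite exchange_big.
rewrite exchange_big.
under eq_bigr => b _ do rewrite exchange_big.
apply: eq_bigr => b _.
transitivity (\sum_b' R (mxvec_index i b) (mxvec_index i' b') * (b' == b)%:R).
  apply: eq_bigr => b' _; rewrite -HKe mulr_sumr; apply: eq_bigr => k _.
  rewrite mulr_sumr; apply: eq_bigr => j _; ring.
under eq_bigr => b' _ do rewrite mulrC.
by rewrite sum_ind.
Qed.


Definition diagm n (d : 'I_n -> C) : 'M[C]_n := \matrix_(k, l) ((k == l)%:R * d k).

Lemma sum_ind_r n (a : 'I_n) (F : 'I_n -> C) : \sum_k F k * (k == a)%:R = F a.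
Proof. under eq_bigr => k _ do rewrite mulrC. exact: sum_ind. Qed.


Lemma quadE n (A : 'M[C]_n) (v : 'cV[C]_n) :
  (adjmx v *m A *m v) 0 0 = \sum_k \sum_l (v k 0)^* * A k l * v l 0.
Proof.
rewrite [LHS]mxE.
transitivity (\sum_l \sum_k (v k 0)^* * A k l * v l 0).
  apply: eq_bigr => l _; rewrite [_ 0 l]mxE mulr_suml.
  by apply: eq_bigr => k _; rewrite adjE.
exact: exchange_big.
Qed.

Lemma sum2 n (i j : 'I_n) (F : 'I_n -> C) x y :
  \sum_l F l * (x * (l == i)%:R + y * (l == j)%:R) = F i * x + F j * y.
Proof.
transitivity (\sum_l ((F l * x) * (l == i)%:R + (F l * y) * (l == j)%:R)).
  by apply: eq_bigr => l _; rewrite mulrDr !mulrA.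
by rewrite big_split /= !sum_ind_r.
Qed.

Lemma sumc2 n (i j : 'I_n) (G : 'I_n -> C) x y :
  \sum_k (x * (k == i)%:R + y * (k == j)%:R)^* * G k = x^* * G i + y^* * G j.
Proof.
transitivity (\sum_k ((x^* * G k) * (k == i)%:R + (y^* * G k) * (k == j)%:R)).
  apply: eq_bigr => k _; rewrite rmorphD !rmorphM !rmorph_nat; ring.
by rewrite big_split /= !sum_ind_r.
Qed.

Lemma quad2 n (A : 'M[C]_n) i j x y :
  (adjmx (\col_k (x * (k == i)%:R + y * (k == j)%:R)) *m A *m
     (\col_k (x * (k == i)%:R + y * (k == j)%:R))) 0 0 =
  x^* * x * A i i + x^* * y * A i j + y^* * x * A j i + y^* * y * A j j.
Proof.
rewrite quadE.
transitivity (\sum_k (x * (k == i)%:R + y * (k == j)%:R)^* * (A k i * x + A k j * y)).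
  apply: eq_bigr => k _.
  transitivity (\sum_l ((x * (k == i)%:R + y * (k == j)%:R)^* * A k l) *
                  (x * (l == i)%:R + y * (l == j)%:R)).
    by apply: eq_bigr => l _; rewrite !mxE.
  by rewrite sum2 -!mulrA -mulrDr.
rewrite sumc2; ring.
Qed.

Lemma psd_ge0 n (A : 'M[C]_n) i : psd A -> 0 <= A i i.
Proof.
move=> /(_ (\col_k (1 * (k == i)%:R + 0 * (k == i)%:R))).
by rewrite quad2 rmorph1 rmorph0 !mul0r !mulr0 !addr0 !mul1r mul0r addr0.
Qed.

Lemma L0 (a b c : C) : (forall x, 0 <= x^* * a + x * b + c) -> a + b = 0.
Proof.
move=> H.
have cr : c \is Num.real.
  by have := H 0; rewrite rmorph0 !mul0r !add0r => /ger0_real.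
have ur : a + b \is Num.real.
  have := H 1; rewrite rmorph1 !mul1r => /ger0_real Hr.
  have -> : a + b = (a + b + c) - c by ring.
  by rewrite rpredB.
case: (eqVneq (a + b) 0) => // Hu.
pose x := - (c + 1) / (a + b).
have xr : x \is Num.real by rewrite rpredM ?rpredN ?rpredD ?rpredV ?rpred1.
have := H x; rewrite (conj_Creal xr).
have -> : x * a + x * b + c = -1.
  by rewrite -mulrDr /x divfK // opprD addrAC addNr add0r.
by rewrite oppr_ge0 ler10.
Qed.

Lemma L1 (a b c : C) : (forall x, 0 <= x^* * a + x * b + c) -> a = 0 /\ b = 0.
Proof.
move=> H; have h1 := L0 H.
have h2 : 'i^* * a + 'i * b = 0.
  apply: (@L0 _ _ c) => y; have := H ('i * y); rewrite rmorphM.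
  move=> Hy; have -> : y^* * ('i^* * a) + y * ('i * b) + c = 'i^* * y^* * a + 'i * y * b + c by ring.
  exact: Hy.
rewrite conjCi mulNr addrC -mulrBr in h2.
have /eqP := h2; rewrite mulf_eq0 (negbTE (neq0Ci _)) /= subr_eq0 => /eqP eab.
have a2 : a + a = 0 by rewrite -{2}eab.
have : a *+ 2 == 0 by rewrite mulr2n a2.
rewrite mulrn_eq0 /= => /eqP a0.
by split => //; rewrite eab.
Qed.

Lemma psd_off n (A : 'M[C]_n) i j : psd A -> A i i = 0 -> A i j = 0 /\ A j i = 0.
Proof.
move=> HA Hii; apply: (@L1 _ _ (A j j)) => x.
have := HA (\col_k (x * (k == i)%:R + 1 * (k == j)%:R)).
by rewrite quad2 Hii rmorph1 !mul1r mulr1 mulr0 add0r.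
Qed.

Lemma diag_mulE n (d : 'I_n -> C) (A : 'M[C]_n) k l :
  (diagm d *m A) k l = d k * A k l.
Proof.
rewrite mxE (bigD1 k) //= [X in _ + X]big1 ?addr0 => [|m Hm].
  by rewrite mxE eqxx mul1r.
by rewrite mxE eq_sym (negbTE Hm) !mul0r.
Qed.

Lemma tr_diag_mul n (d : 'I_n -> C) (A : 'M[C]_n) :
  \tr (diagm d *m A) = \sum_k d k * A k k.
Proof. by apply: eq_bigr => k _; rewrite diag_mulE. Qed.

Lemma tr_diag n (d : 'I_n -> C) : \tr (diagm d) = \sum_k d k.
Proof. by apply: eq_bigr => k _; rewrite mxE eqxx mul1r. Qed.

Lemma psd_diagm n (d : 'I_n -> C) : (forall k, 0 <= d k) -> psd (diagm d).
Proof.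
move=> Hd v; rewrite quadE; apply: sumr_ge0 => k _.
have -> : \sum_l (v k 0)^* * diagm d k l * v l 0 = d k * (v k 0 * (v k 0)^*).
  transitivity (\sum_l ((v k 0)^* * d k * v l 0) * (l == k)%:R).
    by apply: eq_bigr => l _; rewrite mxE eq_sym; ring.
  by rewrite sum_ind_r; ring.
by apply: mulr_ge0 => //; apply: mul_conjC_ge0.
Qed.

Lemma ptrace_diag m n (d : 'I_(m * n) -> C) i i' :
  ptraceB (diagm d) i i' = (i == i')%:R * \sum_j d (mxvec_index i j).
Proof.
rewrite mxE mulr_sumr; apply: eq_bigr => j _.
by rewrite mxE mi_eq eqxx andbT.
Qed.

Lemma sum_ind_l n (a : 'I_n) (F : 'I_n -> C) : \sum_k (a == k)%:R * F k = F a.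
Proof. under eq_bigr => k _ do rewrite eq_sym. exact: sum_ind. Qed.

Lemma half2 : (2%:R : C)^-1 *+ 2 = 1.
Proof. by rewrite -[RHS](@mulVf _ 2%:R) ?pnatr_eq0 // mulr_natr. Qed.

End Aux.

Definition dP (C : numClosedFieldType) (k : 'I_(2 * 2)) : C :=
  ((pair_of_idx k).2 == ord0)%:R.
Definition rho0 (C : numClosedFieldType) : 'M[C]_(2 * 2) :=
  diagm (fun k => ((pair_of_idx k).1 == (pair_of_idx k).2)%:R / 2%:R).
Definition R0 (C : numClosedFieldType) : 'M[C]_(2 * 2) :=
  diagm (fun k => dP C k / 2%:R).

Lemma dP01 (C : numClosedFieldType) k : dP C k * dP C k = dP C k.
Proof. by rewrite /dP; case: (_ == _); rewrite ?mul1r ?mul0r. Qed.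

Lemma dP_ge0 (C : numClosedFieldType) k : 0 <= dP C k.
Proof. by rewrite /dP ler0n. Qed.

Lemma dP_le1 (C : numClosedFieldType) k : 0 <= 1 - dP C k.
Proof. by rewrite /dP; case: (_ == _); rewrite ?subrr ?subr0 ?ler01. Qed.

Lemma trR0 (C : numClosedFieldType) : \tr (R0 C) = 1.
Proof.
rewrite tr_diag sum_mi.
transitivity (\sum_(i < 2) (2%:R : C)^-1); last by rewrite sumr_const card_ord half2.
apply: eq_bigr => i _.
by rewrite -[RHS](sum_ind (ord0 : 'I_2) (fun _ => (2%:R : C)^-1)); apply: eq_bigr => j _; rewrite /dP pair_mi.
Qed.

Lemma abs4 (C : numClosedFieldType) (x y a b c d : C) :
  x = a * c -> y = b * d -> a * d = 0 -> b * c = 0 -> x * y = 0.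
Proof.
move=> -> -> H1 H2.
have -> : a * c * (b * d) = (a * d) * (b * c) by ring.
by rewrite H1 mul0r.
Qed.

Theorem mainTheorem9 (C : numClosedFieldType) :
  exists (dA dB : nat) (P : 'M[C]_(dA * dB)),
    orth_proj P /\
    (forall rho, N_B P rho -> ST_B P rho) /\
    (exists rho, ST_B P rho /\ ~ N_B P rho).
Proof.
exists 2%N, 2%N, (diagm (dP C)); split; [|split].
- split; apply/matrixP => k l.
    rewrite adjE !mxE /dP !rmorphM !rmorph_nat eq_sym.
    by case: eqP => [->|_] //; rewrite !mul0r.
  by rewrite diag_mulE !mxE mulrCA dP01.
- move=> rho [Hd [R [HR [r [K [HK Hrho]]]]]]; split => //.
  by exists R; split => //; rewrite Hrho ptrace_superop.
exists (rho0 C); split.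
  split; [split|].
  - by apply: psd_diagm => k; rewrite divr_ge0 ?ler0n.
  - rewrite tr_diag sum_mi.
    transitivity (\sum_(i < 2) (2%:R : C)^-1); last by rewrite sumr_const card_ord half2.
    apply: eq_bigr => i _.
    rewrite -[RHS](sum_ind_l i (fun _ => (2%:R : C)^-1)).
    by apply: eq_bigr => j _; rewrite pair_mi.
  exists (R0 C); split; first split; first split.
  - by apply: psd_diagm => k; rewrite divr_ge0 ?ler0n ?dP_ge0.
  - exact: trR0.
  - have -> : diagm (dP C) *m R0 C = R0 C.
      apply/matrixP => k l; rewrite diag_mulE !mxE mulrCA; congr (_ * _).
      by rewrite mulrA dP01.
    exact: trR0.
  - apply/matrixP => i i'; rewrite !ptrace_diag; congr (_ * _).
    transitivity ((2%:R : C)^-1).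
      rewrite -[RHS](sum_ind_l i (fun _ => (2%:R : C)^-1)).
      by apply: eq_bigr => j _; rewrite pair_mi.
    rewrite -[LHS](sum_ind (ord0 : 'I_2) (fun _ => (2%:R : C)^-1)).
    by apply: eq_bigr => j _; rewrite /dP pair_mi.
move=> [_ [R [[[HRpsd HRtr] HPR] [r [K [HK Hrho]]]]]].
have Hs : \sum_k (1 - dP C k) * R k k = 0.
  transitivity (\tr R - \tr (diagm (dP C) *m R)); last by rewrite HRtr HPR subrr.
  by rewrite tr_diag_mul /mxtrace -sumrB; apply: eq_bigr => k' _; rewrite mulrBl mul1r.
have Hz := psumr_eq0P (fun k' _ => mulr_ge0 (dP_le1 C k') (psd_ge0 k' HRpsd)) Hs.
have Hdiag i b : b != ord0 -> R (mxvec_index i b) (mxvec_index i b) = 0.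
  move=> Hb; have := Hz (mxvec_index i b) isT.
  by rewrite /dP pair_mi /= (negbTE Hb) subr0 mul1r.
have Hoff i b l : b != ord0 -> R (mxvec_index i b) l = 0 /\ R l (mxvec_index i b) = 0.
  by move=> Hb; apply: psd_off HRpsd (Hdiag i b Hb).
pose mm (j : 'I_2) := \sum_k K k j ord0 * (K k j ord0)^*.
have Hent i j : rho0 C (mxvec_index i j) (mxvec_index i j) =
    R (mxvec_index i ord0) (mxvec_index i ord0) * mm j.
  rewrite Hrho superopE /mm mulr_sumr; apply: eq_bigr => k _.
  rewrite (bigD1 ord0) //= [X in _ + X]big1 ?addr0 => [|b Hb]; last first.
    by apply: big1 => b' _; rewrite (Hoff i b _ Hb).1 mulr0 mul0r.
  rewrite (bigD1 ord0) //= [X in _ + X]big1 ?addr0 => [|b' Hb']; last first.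
    by rewrite (Hoff i b' _ Hb').2 mulr0 mul0r.
  ring.
have Hval i j : rho0 C (mxvec_index i j) (mxvec_index i j) = (i == j)%:R / 2%:R.
  by rewrite mxE eqxx mul1r pair_mi.
have e00 := Hent ord0 ord0; have e11 := Hent ord_max ord_max.
have e01 := Hent ord0 ord_max; have e10 := Hent ord_max ord0.
rewrite !Hval !eqxx mul1r in e00 e11.
rewrite !Hval /= mul0r in e01 e10.
have := abs4 e00 e11 (esym e01) (esym e10).
by move/eqP; rewrite mulf_eq0 invr_eq0 pnatr_eq0.
Qed.
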